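(* ${\rm ML}^{\rm W}(K_3)=3$, and ${\rm ML}^{\rm W}(K_n)=\frac{n^2-5n+10}{2}$ for every $n \geq 4$.
   Context: $K_n$ is the complete graph on $n$ vertices. A walk of a graph $G$ is a sequence of vertices $u_0u_1\dots u_p$ with $u_tu_{t+1}\in E(G)$ for all $t$ (vertices and edges may repeat); its length is $p$. For a walk $W$ of $G$, $G+W$ is the multigraph on $V(G)$ whose edge multiset consists of $E(G)$ together with each edge added as many times as $W$ traverses it. A multigraph is locally irregular if no two adjacent vertices have the same degree; a walk is irregularising if $G+W$ is locally irregular. ${\rm ML}^{\rm W}(G)$ denotes the minimum length of an irregularising walk of $G$ (a walk of length $0$ is allowed). *)

(* Defs.v *)
From mathcomp Require Import all_boot.
Set Implicit Arguments. Unset Strict Implicit. Unset Printing Implicit Defensive.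

(* A simple graph on a finite vertex type T: a symmetric irreflexive relation. *)
Definition K (n : nat) : rel 'I_n := fun i j => i != j.
Arguments K n : clear implicits.

Section Walks.
Variables (T : finType) (e : rel T).

(* A walk u_0 u_1 ... u_p is represented by its start x = u_0 and the
   sequence s = [:: u_1; ...; u_p]; it is a walk iff path e x s.
   Its length is size s (a walk of length 0 is a single vertex). *)
Definition is_walk (x : T) (s : seq T) : bool := path e x s.

(* Degree of v in the multigraph G + W: degree of v in G, plus the number of
   walk steps u_t u_(t+1) (edge traversals) incident to v. Since G has no
   loops, each traversal of an edge incident to v contributes exactly 1. *)
Definition deg_plus_walk (x : T) (s : seq T) (v : T) : nat :=
  #|[set u | e v u]| +
  count (fun p : T * T => (p.1 == v) || (p.2 == v)) (zip (x :: s) s).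

(* G + W locally irregular: adjacent vertices have distinct degrees.
   (Adjacency in G + W coincides with adjacency in G, as W only uses
   edges of G.) *)
Definition irregularising (x : T) (s : seq T) : Prop :=
  is_walk x s /\
  forall u v : T, e u v -> deg_plus_walk x s u <> deg_plus_walk x s v.

Definition MLW_is (L : nat) : Prop :=
  (exists (x : T) (s : seq T), irregularising x s /\ size s = L) /\
  (forall (x : T) (s : seq T), irregularising x s -> L <= size s).

End Walks.

(* Main.v *)
From mathcomp Require Import all_boot zify.
Require Import Defs.
Set Implicit Arguments. Unset Strict Implicit.

Lemma par_sum (r : bool) (s : seq nat) : forall a, sorted ltn s ->
  all (fun y => (odd y == r) && (a <= y)) s ->
  a * size s + size s * (size s).-1 <= sumn s.
Proof.
elim: s => [|x t IH] a; first by rewrite muln0.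
move=> /= hs /andP [/andP [hx hax] hall].
have hmin := order_path_min ltn_trans hs.
have hall2 : all (fun y => (odd y == r) && (x.+2 <= y)) t.
  apply/allP => y hy.
  have /andP [hy1 _] := allP hall y hy.
  have hxy := allP hmin y hy.
  rewrite hy1 /=.
  case: (eqVneq y x.+1) => [E|ne].
    by move: hy1 hx; rewrite E /= => /eqP <- /eqP; case: (odd x).
  by rewrite ltn_neqAle eq_sym ne hxy.
have := IH x.+2 (path_sorted hs) hall2.
case: (size t) => [|k] /=; nia.
Qed.

Lemma par_sum_uniq (r : bool) (s : seq nat) a : uniq s ->
  all (fun y => (odd y == r) && (a <= y)) s ->
  a * size s + size s * (size s).-1 <= sumn s.
Proof.
move=> hu hall.
have hp : perm_eq (sort leq s) s by rewrite perm_sort.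
rewrite -(perm_size hp) -(perm_sumn hp).
apply: (@par_sum r); last by rewrite (perm_all _ hp).
rewrite ltn_sorted_uniq_leq (perm_uniq hp) hu /=.
exact: (sort_sorted leq_total).
Qed.

Lemma comb_bound (s : seq nat) : uniq s -> count odd s <= 2 -> 4 <= size s ->
  size s ^ 2 + 10 <= sumn s + 5 * size s.
Proof.
move=> hu hc hn.
have hperm := perm_filterC odd s.
have hsum : sumn s = sumn [seq x <- s | odd x] + sumn [seq x <- s | predC odd x].
  by rewrite -sumn_cat; apply: perm_sumn; rewrite perm_sym hperm.
have hsz : size s = size [seq x <- s | odd x] + size [seq x <- s | predC odd x].
  by rewrite -size_cat; apply: perm_size; rewrite perm_sym hperm.
have hO := @par_sum_uniq true [seq x <- s | odd x] 1 (filter_uniq _ hu).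
have hE := @par_sum_uniq false [seq x <- s | predC odd x] 0 (filter_uniq _ hu).
have hO' : all (fun y => (odd y == true) && (1 <= y)) [seq x <- s | odd x].
  apply/allP => y; rewrite mem_filter => /andP [hy _]; rewrite hy /=.
  by case: y hy.
have hE' : all (fun y => (odd y == false) && (0 <= y)) [seq x <- s | predC odd x].
  apply/allP => y; rewrite mem_filter => /andP [hy _]; move: hy => /= hy.
  by rewrite andbT; apply/eqP; apply/negbTE.
move: (hO hO') (hE hE') hn; rewrite hsum hsz -size_filter in hc *.
move: hc.
set a := size _; set b := size _.
move: a b => [|[|[|a]]] [|b] //= _; nia.
Qed.

Set Implicit Arguments. Unset Strict Implicit.

Lemma walk_cnt (T : eqType) (x : T) (s : seq T) (v : T) :
  path (fun a b : T => a != b) x s ->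
  count (fun p : T * T => (p.1 == v) || (p.2 == v)) (zip (x :: s) s) + (last x s == v)
  = 2 * count_mem v s + (x == v).
Proof.
elim: s x => [|y t IH] x /=; first by rewrite addnC.
move=> /andP [hxy hp]. rewrite -addnA IH //.
have : ~~ ((x == v) && (y == v)).
  by apply/negP => /andP [/eqP E1 /eqP E2]; rewrite E1 E2 eqxx in hxy.
by case: (x == v); case: (y == v) => //= _; lia.
Qed.

Definition cnt n (x : 'I_n) (s : seq 'I_n) (v : 'I_n) :=
  count (fun p : 'I_n * 'I_n => (p.1 == v) || (p.2 == v)) (zip (x :: s) s).

Lemma card_nbr n (v : 'I_n) : #|[set u | K n v u]| = n.-1.
Proof.
have -> : [set u | K n v u] = [set~ v] by apply/setP => u; rewrite !inE eq_sym.
by rewrite cardsC1 card_ord.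
Qed.

Lemma deg_cnt n (x : 'I_n) s v : deg_plus_walk (K n) x s v = n.-1 + cnt x s v.
Proof. by rewrite /deg_plus_walk card_nbr. Qed.

Lemma irr_inj n (x : 'I_n) s : irregularising (K n) x s -> injective (cnt x s).
Proof.
move=> [_ H] u v E; apply/eqP; apply/negPn/negP => Huv.
by apply: (H u v Huv); rewrite !deg_cnt E.
Qed.

Lemma sumn_mapD (T : Type) (F G : T -> nat) r :
  sumn [seq F v + G v | v <- r] = sumn (map F r) + sumn (map G r).
Proof. by elim: r => //= a r ->; lia. Qed.

Lemma sum_eq1 (T : finType) (y : T) : sumn [seq nat_of_bool (y == v) | v <- enum T] = 1.
Proof.
have -> : sumn [seq nat_of_bool (y == v) | v <- enum T] = count_mem y (enum T).
  elim: (enum T) => //= a r ->; by rewrite eq_sym.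
by rewrite count_uniq_mem ?enum_uniq // mem_enum.
Qed.

Lemma sum_cm (T : finType) (t : seq T) : sumn [seq count_mem v t | v <- enum T] = size t.
Proof.
elim: t => [|y t IH] /=; first by elim: (enum T).
by rewrite sumn_mapD IH sum_eq1.
Qed.

Lemma lower n (x : 'I_n) s : 4 <= n -> irregularising (K n) x s ->
  (n ^ 2 + 10 - 5 * n) %/ 2 <= size s.
Proof.
move=> hn hirr.
have hinj := irr_inj hirr.
have hw : path (fun a b : 'I_n => a != b) x s by case: hirr.
set L := [seq cnt x s v | v <- enum 'I_n].
have hsize : size L = n by rewrite size_map size_enum_ord.
have hu : uniq L by rewrite map_inj_uniq ?enum_uniq.
have hsum : sumn L = 2 * size s.
  have E : [seq cnt x s v + (last x s == v) | v <- enum 'I_n]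
         = [seq count_mem v s + count_mem v s + (x == v) | v <- enum 'I_n].
    by apply: eq_map => v; rewrite /cnt walk_cnt // mul2n -addnn.
  move: (congr1 sumn E); rewrite !sumn_mapD sum_cm !sum_eq1 /L => h.
  rewrite mul2n -addnn; exact: (addIn h).
have hodd : count odd L <= 2.
  rewrite count_map.
  apply: (@leq_trans (count (predU (pred1 x) (pred1 (last x s))) (enum 'I_n))).
    apply: sub_count => v /=.
    case: (eqVneq v x) => //= hx; case: (eqVneq v (last x s)) => //= hl.
    have h := walk_cnt v hw.
    rewrite eq_sym (negbTE hl) eq_sym (negbTE hx) !addn0 in h.
    by rewrite /cnt h mul2n odd_double.
  apply: (@leq_trans (count (pred1 x) (enum 'I_n) + count (pred1 (last x s)) (enum 'I_n))).
    by rewrite -count_predUI leq_addr.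
  by rewrite !count_uniq_mem ?enum_uniq // !mem_enum.
have := comb_bound hu hodd; rewrite hsize hsum => /(_ hn) hb.
have -> : size s = (2 * size s) %/ 2 by rewrite mulKn.
apply: leq_div2r; lia.
Qed.

Fixpoint down (a k : nat) : seq nat := if k is k'.+1 then (a + k) :: down a k' else [:: a].
Fixpoint D (m i : nat) : seq nat :=
  if i is i'.+1 then down (m - i' + 2) i' ++ D m i' else [::].

Lemma size_down a k : size (down a k) = k.+1.
Proof. by elim: k => //= k ->. Qed.

Lemma size_D m i : 2 * size (D m i) = i * i.+1.
Proof. elim: i => //= i IH; rewrite size_cat size_down; nia. Qed.

Lemma cnt_down w a k : count_mem w (down a k) = (a <= w) && (w <= a + k).
Proof.
elim: k => [|k IH] /=; first by lia.
rewrite IH; lia.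
Qed.

Lemma cnt_D m i w : i <= m -> w <= m + 2 -> count_mem w (D m i) = w - 2 - (m - i).
Proof.
move=> + hw; elim: i => [|i IH] hi /=; first by lia.
rewrite count_cat cnt_down IH; last by lia.
case: (leqP (m - i + 2) w) => h /=.
  have -> : w <= m - i + 2 + i by lia. simpl; lia.
lia.
Qed.

Lemma all_down a k : all (fun w => w <= a + k) (down a k).
Proof.
elim: k => [|k IH] /=; first by rewrite addn0 leqnn.
rewrite leqnn /=; apply: sub_all IH => w /= h; lia.
Qed.

Lemma all_D m i : i <= m -> all (fun w => w <= m + 2) (D m i).
Proof.
elim: i => [|i IH] hi //=; rewrite all_cat IH ?andbT; last by lia.
apply: sub_all (all_down _ _) => w /= h; lia.
Qed.

Lemma path_down a k y : y != a + k -> path (fun a b : nat => a != b) y (down a k).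
Proof.
elim: k y => [|k IH] y /=; first by rewrite addn0 => ->.
move=> -> /=; apply: IH; lia.
Qed.

Lemma last_down a k y : last y (down a k) = a.
Proof. by elim: k y => //= k IH y. Qed.

Lemma path_D m i y : i <= m -> y != m + 2 -> path (fun a b : nat => a != b) y (D m i).
Proof.
elim: i y => [|i IH] y hi hy //=.
rewrite cat_path path_down /=; last by have -> : m - i + 2 + i = m + 2 by lia.
case: i IH hi => [|i] IH hi; first by [].
rewrite last_down; apply: IH; lia.
Qed.

Lemma last_D m i y : last y (D m i.+1) = m + 2.
Proof.
elim: i y => [|i IH] y; first by rewrite /= subn0.
have -> : D m i.+2 = down (m - i.+1 + 2) i.+1 ++ D m i.+1 by [].
by rewrite last_cat IH.
Qed.

Lemma path_inord k y S : all (fun w => w <= k) (y :: S) ->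
  path (fun a b : nat => a != b) y S ->
  path (fun a b : 'I_k.+1 => a != b) (inord y) (map inord S).
Proof.
elim: S y => [|z S IH] y //= /and3P [hy hz hS] /andP [hyz hp].
rewrite IH /= ?hz ?hS // andbT.
by rewrite -(inj_eq val_inj) /= !inordK // ltnS.
Qed.

Lemma cnt_inord k (S : seq nat) (v : 'I_k.+1) : all (fun w => w <= k) S ->
  count_mem v (map inord S) = count_mem (val v) S.
Proof.
elim: S => [|z S IH] //= /andP [hz hS]; rewrite IH //.
by rewrite -(inj_eq val_inj) /= inordK.
Qed.

Definition G (w : nat) := if w == 0 then 0 else if w == 1 then 1 else if w == 2 then 3 else 2 * (w - 2).

Lemma G_inj u v : G u = G v -> u = v.
Proof. rewrite /G; by case: u => [|[|[|u]]]; case: v => [|[|[|v]]] /=; lia. Qed.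

Definition Sm m := rcons (2 :: D m m) 2.

Lemma upper m : 1 <= m -> irregularising (K m.+3) (inord 1) (map inord (Sm m)) /\
  size (map inord (Sm m) : seq 'I_m.+3) = (m.+3 ^ 2 + 10 - 5 * m.+3) %/ 2.
Proof.
move=> hm.
have hall : all (fun w => w <= m.+2) (1 :: Sm m).
  rewrite /Sm /= -cats1 all_cat /= andbT.
  have := all_D (leqnn m); rewrite (eq_all (a2 := fun w => w <= m.+2)) //.
  move=> w /=; by rewrite addn2.
have hS : all (fun w => w <= m.+2) (Sm m) by case/andP: hall.
have hp : path (fun a b : nat => a != b) 1 (Sm m).
  rewrite /Sm /= -cats1 cat_path path_D //; last by lia.
  by case: m hm {hall hS} => // m' _; rewrite last_D /=; apply/eqP; lia.
have hw := path_inord hall hp.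
split; last first.
  rewrite size_map /Sm size_rcons /=.
  have h2 := size_D m m.
  have -> : m.+3 ^ 2 + 10 - 5 * m.+3 = 2 * (size (D m m)).+2 by nia.
  by rewrite mulKn.
split; first exact: hw.
move=> u v huv; rewrite !deg_cnt => /addnI.
suff E : forall w : 'I_m.+3, cnt (inord 1) (map inord (Sm m)) w = G (val w).
  rewrite !E => /G_inj /val_inj Euv; by move: huv; rewrite Euv /K eqxx.
move=> w.
have h := walk_cnt w hw.
have e1 : (last (inord 1) (map inord (Sm m)) == w :> 'I_m.+3) = (2 == val w).
  by rewrite last_map /Sm last_rcons -(inj_eq val_inj) /= inordK.
have e2 : count_mem w (map inord (Sm m)) = (2 == val w) + (val w - 2) + (2 == val w).
  rewrite cnt_inord // /Sm -cats1 count_cat /= cnt_D //; last by have := ltn_ord w; lia.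
  lia.
have e3 : (inord 1 == w :> 'I_m.+3) = (1 == val w).
  by rewrite -(inj_eq val_inj) /= inordK.
rewrite e1 e2 e3 in h.
move: h; rewrite /G /cnt.
move: (count _ _) (val w) (ltn_ord w) => c [|[|[|w']]] /= hw'; lia.
Qed.

Lemma K3_lower (x : 'I_3) s : irregularising (K 3) x s -> 3 <= size s.
Proof.
move=> hirr; have hinj := irr_inj hirr.
have hw : path (fun a b : 'I_3 => a != b) x s by case: hirr.
clear hirr; case: s hw hinj => [|a [|b [|c t]]] //= hw hinj.
- have := hinj (inord 0) (inord 1) erefl.
  by move/(congr1 val); rewrite /= !inordK.
- move: hw; rewrite andbT => hxa.
  have : cnt x [:: a] x = cnt x [:: a] a by rewrite /cnt /= !eqxx orbT.
  by move/hinj => E; rewrite E eqxx in hxa.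
- move: hw => /and3P [hxa hab _].
  case: (eqVneq b x) => hbx.
    have : cnt x [:: a; b] x = cnt x [:: a; b] a.
      by rewrite /cnt /= hbx !eqxx !orbT.
    by move/hinj => E; rewrite E eqxx in hxa.
  have : cnt x [:: a; b] x = cnt x [:: a; b] b.
    rewrite /cnt /= !eqxx !orbT /= (eq_sym a x) (negbTE hxa) (negbTE hbx).
    by rewrite (eq_sym x b) (negbTE hbx) (negbTE hab).
  by move/hinj => E; rewrite E eqxx in hbx.
Qed.

Lemma K3_upper : irregularising (K 3) (inord 0) (map inord [:: 1; 2; 1]).
Proof.
split; first by apply: (@path_inord 2).
move=> u v huv; rewrite !deg_cnt => /addnI.
move: huv; rewrite /K /cnt.
case: u => [[|[|[|u]]] hu] //; case: v => [[|[|[|v]]] hv] //=;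
  rewrite -?(inj_eq val_inj) /= ?inordK //.
Qed.

Theorem theorem5p1 :
  MLW_is (K 3) 3 /\
  (forall n : nat, 4 <= n -> MLW_is (K n) ((n ^ 2 + 10 - 5 * n) %/ 2)).
Proof.
split.
  split; last by move=> x s; exact: K3_lower.
  by exists (inord 0), (map inord [:: 1; 2; 1]); split; [exact: K3_upper|].
move=> [|[|[|[|m]]]] // _; split; last by move=> x s; exact: lower.
have [h1 h2] := @upper m.+1 erefl.
by exists (inord 1), (map inord (Sm m.+1)).
Qed.
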